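(* Let $c\in(-1,0]$ and let $x,y,z\in[c,1]$ satisfy $x+yz\ge0$, $y+xz\ge0$, $z+xy\ge0$. Then $$2-x^2-y^2+x+yz+y+xz+z+xy\ge 1+c.$$ *)

(* Defs.v *)
From Stdlib Require Import Reals Lra Psatz.

(* Main.v *)
Require Import Defs.
From Stdlib Require Import Reals Lra Psatz.
Open Scope R_scope.
Lemma aux (c y z : R) : -1 < c <= 0 -> c <= y <= 1 -> c <= z <= 1 -> 1 - y*y + y*z >= c.
Proof. intros.
destruct (Rle_lt_dec 0 y).
  - destruct (Rle_lt_dec z y).
    + assert (y*(y-z) <= 1*(1-c)) by (apply Rmult_le_compat; lra). lra.
    + assert (0 <= y*(z-y)) by (apply Rmult_le_pos; lra). nra.
  - destruct (Rle_lt_dec y z).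
    + assert ((-y)*(z-y) <= (-c)*(1-c)) by (apply Rmult_le_compat; lra).
      assert (0 <= (1+c)*(1-c)) by (apply Rmult_le_pos; lra). nra.
    + assert (0 <= (-y)*(y-z)) by (apply Rmult_le_pos; lra). nra.
Qed.
Theorem proposition3p1 (c x y z : R) :
  -1 < c <= 0 ->
  c <= x <= 1 -> c <= y <= 1 -> c <= z <= 1 ->
  0 <= x + y * z -> 0 <= y + x * z -> 0 <= z + x * y ->
  2 - x ^ 2 - y ^ 2 + x + y * z + y + x * z + z + x * y >= 1 + c.
Proof.
intros Hc Hx Hy Hz H1 H2 H3. simpl.
assert (Hxx : x*x <= x \/ x < 0) by (destruct (Rle_lt_dec 0 x); [left; nra|right; lra]).
assert (Hyy : y*y <= y \/ y < 0) by (destruct (Rle_lt_dec 0 y); [left; nra|right; lra]).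
pose proof (aux c y z Hc Hy Hz). pose proof (aux c x z Hc Hx Hz).
destruct Hxx as [Hxx|Hxx]; [lra|].
destruct Hyy as [Hyy|Hyy]; [lra|].
assert (Hz0 : z < 0) by nra.
assert (x*x <= c*c) by nra.
assert (y*y <= c*c) by nra.
nra.
Qed.
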